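(* Let $A$ be an observable on $\mathbb C^d$ with orthonormal eigenbasis $\{\varphi_k\}_{k=0}^{d-1}$, let $\Phi$ be a unit vector and $p_k=|\langle\varphi_k,\Phi\rangle|^2$. Then for every unit vector $\Psi\in\mathbb C^d$, $$d(T_{A\Phi}\Psi,\Phi)\le 2\min_k d(\Phi,\varphi_k)=2\sqrt2\,\sqrt{1-\max_k\sqrt{p_k}}.$$
   Context: $\mathcal H=\mathbb C^d$ with the standard inner product; states are unit vectors. An observable $A$ is non-degenerate and identified with its orthonormal eigenbasis $\{\varphi_k\}_{k=0}^{d-1}$. Bures metric: $d(\Phi,\Psi)=\sqrt{2-2|\langle\Phi,\Psi\rangle|}$. Physical imposition operator: $T_{A\Phi}\Psi=\sum_{k=0}^{d-1}|\langle\varphi_k,\Phi\rangle|\,u_k(\Psi)\,\varphi_k$, where $u_k(\Psi)=\langle\varphi_k,\Psi\rangle/|\langle\varphi_k,\Psi\rangle|$ if $\langle\varphi_k,\Psi\rangle\ne0$ and $u_k(\Psi)=1$ otherwise. *)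

(* Defs.v *)
(* The scalar field is an arbitrary numClosedFieldType C
   (an algebraically closed field with conjugation, norm and order, e.g. C = ℂ or algC). *)
From HB Require Import structures.
From mathcomp Require Import all_boot all_order all_algebra.
Set Implicit Arguments. Unset Strict Implicit. Unset Printing Implicit Defensive.
Import Order.TTheory GRing.Theory Num.Theory.
Local Open Scope ring_scope.

Definition inner (C : numClosedFieldType) (d : nat) (u v : 'I_d -> C) : C :=
  \sum_(i < d) (u i)^* * v i.

Definition unit_vec (C : numClosedFieldType) (d : nat) (u : 'I_d -> C) : Prop :=
  inner u u = 1.

Definition orthonormal_basis (C : numClosedFieldType) (d : nat)
  (phi : 'I_d -> 'I_d -> C) : Prop :=
  forall j k : 'I_d, inner (phi j) (phi k) = (j == k)%:R.

Definition bures (C : numClosedFieldType) (d : nat) (u v : 'I_d -> C) : C :=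
  sqrtC (2 - 2 * `|inner u v|).

Definition phase (C : numClosedFieldType) (d : nat) (phi : 'I_d -> 'I_d -> C)
  (Psi : 'I_d -> C) (k : 'I_d) : C :=
  if inner (phi k) Psi != 0 then inner (phi k) Psi / `|inner (phi k) Psi| else 1.

Definition imposition (C : numClosedFieldType) (d : nat) (phi : 'I_d -> 'I_d -> C)
  (Phi Psi : 'I_d -> C) : 'I_d -> C :=
  fun i => \sum_(k < d) `|inner (phi k) Phi| * phase phi Psi k * phi k i.

(* Main.v *)
Require Import Defs.
From HB Require Import structures.
From mathcomp Require Import all_boot all_order all_algebra ring.
Import Order.TTheory GRing.Theory Num.Theory.
Local Open Scope ring_scope.

Section S.
Variable C : numClosedFieldType.

Lemma innerSl (m d : nat) (c : 'I_m -> C) (u : 'I_m -> 'I_d -> C) v :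
  inner (fun i => \sum_(k < m) c k * u k i) v = \sum_(k < m) (c k)^* * inner (u k) v.
Proof.
rewrite /inner.
under eq_bigr do rewrite rmorph_sum big_distrl.
rewrite exchange_big; apply: eq_bigr => k _; rewrite mulr_sumr.
by apply: eq_bigr => i _; rewrite rmorphM mulrA.
Qed.

Lemma innerSr (m d : nat) (c : 'I_m -> C) (u : 'I_m -> 'I_d -> C) v :
  inner v (fun i => \sum_(k < m) c k * u k i) = \sum_(k < m) c k * inner v (u k).
Proof.
rewrite /inner.
under eq_bigr do rewrite mulr_sumr.
rewrite exchange_big; apply: eq_bigr => k _; rewrite mulr_sumr.
by apply: eq_bigr => i _; rewrite mulrCA.
Qed.

Lemma innerBl d (u w v : 'I_d -> C) :
  inner (fun i => u i - w i) v = inner u v - inner w v.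
Proof.
rewrite /inner -sumrB; apply: eq_bigr => i _; by rewrite rmorphB mulrBl.
Qed.

Lemma innerBr d (u w v : 'I_d -> C) :
  inner v (fun i => u i - w i) = inner v u - inner v w.
Proof.
rewrite /inner -sumrB; apply: eq_bigr => i _; by rewrite mulrBr.
Qed.

Lemma inner_conj d (u v : 'I_d -> C) : inner v u = (inner u v)^*.
Proof.
rewrite /inner rmorph_sum; apply: eq_bigr => i _.
by rewrite rmorphM /= conjCK mulrC.
Qed.

Lemma inner_ge0 d (u : 'I_d -> C) : 0 <= inner u u.
Proof.
rewrite /inner; apply: sumr_ge0 => i _; rewrite -normCKC; exact: exprn_ge0.
Qed.

Lemma bessel (n : nat) (phi : 'I_n -> 'I_n -> C) (Phi : 'I_n -> C) :
  orthonormal_basis phi -> unit_vec Phi ->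
  \sum_(k < n) `|inner (phi k) Phi| ^+ 2 <= 1.
Proof.
move=> Hphi HPhi.
set a := fun k => inner (phi k) Phi.
set w := fun i => \sum_(k < n) a k * phi k i.
have Hs : inner w Phi = \sum_(k < n) `|a k| ^+ 2.
  rewrite innerSl; apply: eq_bigr => k _; by rewrite normCKC.
have Hs2 : inner Phi w = \sum_(k < n) `|a k| ^+ 2.
  rewrite innerSr; apply: eq_bigr => k _; by rewrite normCK inner_conj.
have Hs3 : inner w w = \sum_(k < n) `|a k| ^+ 2.
  rewrite innerSl; apply: eq_bigr => k _.
  rewrite innerSr (bigD1 k) //= Hphi eqxx mulr1 big1 ?addr0 ?normCKC //.
  by move=> l /negbTE Hl; rewrite Hphi eq_sym Hl mulr0.
have := @inner_ge0 _ (fun i => Phi i - w i).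
rewrite innerBl !innerBr Hs Hs2 Hs3 HPhi.
rewrite opprB addrA subrK subr_ge0. done.
Qed.

Lemma norm_phase d (phi : 'I_d -> 'I_d -> C) Psi k : `|phase phi Psi k| = 1.
Proof.
rewrite /phase; case: ifP => [Hn|_]; last exact: normr1.
by rewrite normf_div normr_id divff // normr_eq0.
Qed.

Lemma inner_imp d (phi : 'I_d -> 'I_d -> C) Phi Psi :
  inner (imposition phi Phi Psi) Phi =
  \sum_(k < d) `|inner (phi k) Phi| * (phase phi Psi k)^* * inner (phi k) Phi.
Proof.
rewrite /imposition innerSl; apply: eq_bigr => k _.
by rewrite rmorphM /= conj_normC.
Qed.

Lemma x_le1 (n : nat) (phi : 'I_n -> 'I_n -> C) (Phi : 'I_n -> C) j :
  orthonormal_basis phi -> unit_vec Phi -> `|inner (phi j) Phi| <= 1.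
Proof.
move=> Hphi HPhi; have := @bessel n phi Phi Hphi HPhi.
rewrite (bigD1 j) //= => H.
rewrite -(@expr_le1 _ 2) //; apply: le_trans H.
by rewrite lerDl sumr_ge0 // => k _; rewrite exprn_ge0.
Qed.

Lemma key (n : nat) (phi : 'I_n -> 'I_n -> C) (Phi : 'I_n -> C) Psi j :
  orthonormal_basis phi -> unit_vec Phi ->
  bures (imposition phi Phi Psi) Phi <= 2 * bures Phi (phi j).
Proof.
move=> Hphi HPhi.
have Hb := @bessel n phi Phi Hphi HPhi.
set s := \sum_(k < n) _ in Hb.
set x := `|inner (phi j) Phi|.
have x0 : 0 <= x by exact: normr_ge0.
have x1 : x <= 1 by exact: (@x_le1 n phi Phi j Hphi HPhi).
set S := inner (imposition phi Phi Psi) Phi.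
have H1 : `|S| <= s.
  rewrite /S inner_imp; apply: le_trans (ler_norm_sum _ _ _) _.
  apply: ler_sum => k _.
  by rewrite !normrM norm_conjC norm_phase mulr1 normr_id.
have H2 : 2 * x ^+ 2 - 1 <= `|S|.
  rewrite /S inner_imp (bigD1 j) //=.
  apply: le_trans _ (lerB_normD _ _).
  rewrite !normrM norm_conjC norm_phase mulr1 normr_id -/x -expr2.
  apply: (@le_trans _ _ (x ^+ 2 - (s - x ^+ 2))).
    rewrite -subr_ge0.
    have -> : x ^+ 2 - (s - x ^+ 2) - (2 * x ^+ 2 - 1) = 1 - s by ring.
    by rewrite subr_ge0.
  rewrite lerD2l lerN2.
  have -> : s - x ^+ 2 = \sum_(i < n | i != j) `|inner (phi i) Phi| ^+ 2.
    by rewrite /s (bigD1 j) //= addrC addrK.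
  apply: le_trans (ler_norm_sum _ _ _) _.
  apply: ler_sum => k _.
  by rewrite !normrM norm_conjC norm_phase mulr1 normr_id expr2.
have Hj : `|inner Phi (phi j)| = x by rewrite inner_conj norm_conjC.
rewrite /bures Hj.
have E2 : 0 <= 2 - 2 * x by rewrite subr_ge0 ger_pMr ?ltr0n.
have E : 2 * sqrtC (2 - 2 * x) = sqrtC (2 ^+ 2 * (2 - 2 * x)).
  rewrite sqrtCM ?qualifE /= ?exprn_ge0 ?ler0n // sqrCK // ler0n.
rewrite E ler_sqrtC ?qualifE /= ?mulr_ge0 ?exprn_ge0 ?ler0n //; last first.
  rewrite subr_ge0 ger_pMr ?ltr0n //; exact: le_trans H1 Hb.
apply: (@le_trans _ _ (2 - 2 * (2 * x ^+ 2 - 1))).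
  by rewrite lerD2l lerN2 ler_pM2l ?ltr0n.
rewrite -subr_ge0.
have -> : 2 ^+ 2 * (2 - 2 * x) - (2 - 2 * (2 * x ^+ 2 - 1)) = 4 * (x - 1) ^+ 2.
  rewrite !expr2; ring.
rewrite mulr_ge0 ?ler0n // -real_normK ?exprn_ge0 //.
by rewrite rpredB ?normr_real ?real1.
Qed.

Lemma min_real (x y : C) : x \is Num.real -> y \is Num.real ->
  [/\ Num.min x y <= x, Num.min x y <= y, Num.min x y \is Num.real
     & (Num.min x y = x \/ Num.min x y = y)].
Proof.
move=> xr yr; rewrite /Order.min.
case: ifP => H; first by split; rewrite ?lexx ?ltW //; left.
split; rewrite ?lexx //; last by right.
by rewrite real_leNgt // H.
Qed.

Lemma max_real (x y : C) : x \is Num.real -> y \is Num.real ->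
  [/\ x <= Num.max x y, y <= Num.max x y, Num.max x y \is Num.real
     & (Num.max x y = x \/ Num.max x y = y)].
Proof.
move=> xr yr; rewrite /Order.max.
case: ifP => H; first by split; rewrite ?lexx ?ltW //; right.
split; rewrite ?lexx //; last by left.
by rewrite real_leNgt // H.
Qed.

Arguments min_real {x y}.
Arguments max_real {x y}.

Lemma bigmin_prop (m : nat) (F : 'I_m -> C) x0 :
  x0 \is Num.real -> (forall k, F k \is Num.real) ->
  (forall k, \big[Num.min/x0]_(k < m) F k <= F k) /\
  (\big[Num.min/x0]_(k < m) F k = x0 \/ exists k, \big[Num.min/x0]_(k < m) F k = F k).
Proof.
move=> x0r Fr.
have Hr : forall r (P : pred 'I_m), \big[Num.min/x0]_(k <- r | P k) F k \is Num.real.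
  move=> r P; elim/big_rec: _ => // i y _ yr.
  by case: (min_real (Fr i) yr).
split.
  move=> k; have : k \in index_enum 'I_m by rewrite mem_index_enum.
  elim: (index_enum 'I_m) => // a r IH; rewrite inE big_cons /=.
  case: (min_real (Fr a) (Hr r xpredT)) => H1 H2 _ _.
  case/orP => [/eqP ->|/IH]; first by [].
  exact: le_trans.
have : \big[Num.min/x0]_(k < m) F k \is Num.real /\
  (\big[Num.min/x0]_(k < m) F k = x0 \/ exists k, \big[Num.min/x0]_(k < m) F k = F k).
  elim/big_rec: _; first by split => //; left.
  move=> i y _ [yr Hy]; case: (min_real (Fr i) yr) => _ _ mr [] ->; split => //.
  by right; exists i.
by case.
Qed.

Lemma bigmax_prop (m : nat) (F : 'I_m -> C) x0 :
  x0 \is Num.real -> (forall k, F k \is Num.real) ->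
  (forall k, F k <= \big[Num.max/x0]_(k < m) F k) /\
  (\big[Num.max/x0]_(k < m) F k = x0 \/ exists k, \big[Num.max/x0]_(k < m) F k = F k).
Proof.
move=> x0r Fr.
have Hr : forall r (P : pred 'I_m), \big[Num.max/x0]_(k <- r | P k) F k \is Num.real.
  move=> r P; elim/big_rec: _ => // i y _ yr.
  by case: (max_real (Fr i) yr).
split.
  move=> k; have : k \in index_enum 'I_m by rewrite mem_index_enum.
  elim: (index_enum 'I_m) => // a r IH; rewrite inE big_cons /=.
  case: (max_real (Fr a) (Hr r xpredT)) => H1 H2 _ _.
  case/orP => [/eqP ->|/IH]; first by [].
  move=> H; exact: le_trans H H2.
have : \big[Num.max/x0]_(k < m) F k \is Num.real /\
  (\big[Num.max/x0]_(k < m) F k = x0 \/ exists k, \big[Num.max/x0]_(k < m) F k = F k).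
  elim/big_rec: _; first by split => //; left.
  move=> i y _ [yr Hy]; case: (max_real (Fr i) yr) => _ _ mr [] ->; split => //.
  by right; exists i.
by case.
Qed.
End S.

Theorem proposition2 (C : numClosedFieldType) (n : nat)
  (phi : 'I_n.+1 -> 'I_n.+1 -> C) (Phi : 'I_n.+1 -> C)
  (Hphi : orthonormal_basis phi) (HPhi : unit_vec Phi) :
  let p := fun k : 'I_n.+1 => `|inner (phi k) Phi| ^+ 2 in
  let mind := \big[Num.min/bures Phi (phi ord0)]_(k < n.+1) bures Phi (phi k) in
  let maxsp := \big[Num.max/0]_(k < n.+1) sqrtC (p k) in
  (forall Psi : 'I_n.+1 -> C, unit_vec Psi ->
     bures (imposition phi Phi Psi) Phi <= 2 * mind)
  /\ 2 * mind = 2 * sqrtC 2 * sqrtC (1 - maxsp).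
Proof.
move=> p mind maxsp.
set a := fun k => `|inner (phi k) Phi|.
have a0 : forall k, 0 <= a k by move=> k; exact: normr_ge0.
have a1 : forall k, a k <= 1 by move=> k; exact: (@x_le1 _ n.+1 phi Phi k Hphi HPhi).
have fE : forall k, bures Phi (phi k) = sqrtC (2 - 2 * a k).
  by move=> k; rewrite /bures inner_conj norm_conjC.
have nn : forall k, 0 <= 2 - 2 * a k by move=> k; rewrite subr_ge0 ger_pMr ?ltr0n.
have fr : forall k, bures Phi (phi k) \is Num.real.
  by move=> k; rewrite fE ger0_real // sqrtC_ge0.
have [minle mineq] := @bigmin_prop C n.+1 _ _ (fr ord0) fr.
have [i Hi] : exists i, mind = bures Phi (phi i).
  by case: mineq => [H|[k H]]; [exists ord0 | exists k].
split.
  by move=> Psi _; rewrite Hi; apply: key.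
have GE : forall k, sqrtC (p k) = a k by move=> k; rewrite /p sqrCK.
have Gr : forall k, sqrtC (p k) \is Num.real by move=> k; rewrite GE ger0_real.
have [maxge maxeq] := @bigmax_prop C n.+1 _ _ (real0 C) Gr.
have [j Hj] : exists j, maxsp = a j.
  case: maxeq => [H|[k H]]; last by exists k; rewrite -GE.
  exists ord0; apply/eqP; rewrite eq_le -GE maxge andbT.
  rewrite /maxsp H GE; exact: a0.
have Hmind : mind = bures Phi (phi j).
  apply/eqP; rewrite eq_le minle /= Hi !fE ler_sqrtC ?qualifE /= ?nn //.
  by rewrite lerD2l lerN2 ler_pM2l ?ltr0n // -Hj -GE maxge.
rewrite Hmind Hj fE -mulrA; congr (_ * _).
have -> : 2 - 2 * a j = 2 * (1 - a j) by rewrite mulrBr mulr1.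
by rewrite sqrtCM ?qualifE /= ?ler0n ?subr_ge0.
Qed.
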